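(* Let $H$ be a connected hypergraph, let $u_1,u_2$ be two distinct vertices of $H$, and let $G_{r_1},G_{r_2}$ be connected rooted hypergraphs with roots $r_1,r_2$, each having at least one edge, vertex-disjoint from $H$ and from each other. Let $H_1$ be obtained from $H$ by identifying both $r_1$ and $r_2$ with $u_1$, and $H_2$ be obtained from $H$ by identifying $r_1$ with $u_1$ and $r_2$ with $u_2$. Then $\rho(H_2)>\rho(H_1)$ if one of the following holds: (1) $d_H(u_1)=d_H(u_2)=d_H(u_1,u_2)=1$; (2) $\sigma_{H_1}(V'(G_{r_1}))+x_{u_1}\ge \sigma_{H_1}(V(H))$, where $\mathbf{x}=\mathbf{x}(H_1)$.
   Context: For a connected hypergraph $G$, $d_G(u,v)$ is the length of a shortest path between $u$ and $v$ (a path being a sequence $(v_0,e_1,v_1,\dots,e_p,v_p)$ with $v_{i-1},v_i\in e_i$, $v_{i-1}\ne v_i$, all $v_i,e_i$ distinct, of length $p$), $d_G(v)$ is the number of edges containing $v$, $D(G)=(d_G(u,v))$ is the distance matrix and $\rho(G)$ is its largest eigenvalue. The distance Perron vector $\mathbf{x}(G)$ is the unique positive unit eigenvector of $D(G)$ for $\rho(G)$, and $x_v$ is its entry at $v$. For $X\subseteq V(G)$, $\sigma_G(X)$ is the sum of the entries of $\mathbf{x}(G)$ over $X$. $V'(G_{r_1})$ denotes the set of vertices of the copy of $G_{r_1}$ in $H_1$ other than its root (identified with $u_1$); $V(H)$ is regarded as a subset of $V(H_1)$. *)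

(* Defs.v *)
From HB Require Import structures.
From mathcomp Require Import all_boot all_order all_algebra.
From mathcomp Require Import boolp reals.
Set Implicit Arguments. Unset Strict Implicit. Unset Printing Implicit Defensive.
Import Order.TTheory GRing.Theory Num.Theory.
Local Open Scope ring_scope.

Section Hypergraphs.
Variable T : finType.

Definition hypergraph (E : {set {set T}}) : Prop :=
  forall e, e \in E -> (2 <= #|e|)%N.

Definition hdeg (E : {set {set T}}) (v : T) : nat := #|[set e in E | v \in e]|.

(* A path (v_0,e_1,v_1,...,e_p,v_p) from u to v, encoded as the vertex list
   vs = [v_0;...;v_p] and the edge list es = [e_1;...;e_p]:
   v_{i-1}, v_i in e_i, v_{i-1} <> v_i, all v_i distinct, all e_i distinct,
   all e_i edges. *)
Definition is_path (E : {set {set T}}) (u v : T) (vs : seq T) (es : seq {set T})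
  : bool :=
  [&& size vs == (size es).+1, uniq vs, uniq es, all (fun e => e \in E) es,
      head u vs == u, last u vs == v &
      all (fun i => [&& nth u vs i \in nth set0 es i,
                        nth u vs i.+1 \in nth set0 es i &
                        nth u vs i != nth u vs i.+1]) (iota 0 (size es))].

Definition has_path_of_length (E : {set {set T}}) (u v : T) (p : nat) : bool :=
  `[< exists vs es, is_path E u v vs es /\ size es = p >].

Definition hconnected (E : {set {set T}}) : Prop :=
  forall u v : T, exists p, has_path_of_length E u v p.

(* d_G(u,v): length of a shortest path (0 by convention if there is none,
   which never happens for connected hypergraphs). *)
Definition hdist (E : {set {set T}}) (u v : T) : nat :=
  match pselect (exists p, has_path_of_length E u v p) with
  | left h => ex_minn h
  | right _ => 0%N
  end.

Definition dist_mx (R : pzRingType) (E : {set {set T}}) : 'M[R]_#|T| :=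
  \matrix_(i, j) (hdist E (enum_val i) (enum_val j))%:R.

End Hypergraphs.

Section Spectral.
Variable R : realType.

Definition largest_eigenvalue n (A : 'M[R]_n) (rho : R) : Prop :=
  eigenvalue A rho /\ forall a, eigenvalue A a -> a <= rho.

Definition perron_vector n (A : 'M[R]_n) (x : 'cV[R]_n) : Prop :=
  exists rho, [/\ largest_eigenvalue A rho, forall i, 0 < x i 0,
                  \sum_i x i 0 ^+ 2 = 1 & A *m x = rho *: x].

Definition ventry (W : finType) (x : 'cV[R]_#|W|) (w : W) : R := x (enum_rank w) 0.

Definition sigma (W : finType) (x : 'cV[R]_#|W|) (X : {set W}) : R :=
  \sum_(w in X) ventry x w.
End Spectral.

Section Coalescence.
Variables (T T1 T2 : finType) (r1 : T1) (r2 : T2).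

(* vertex set of the coalescences: V(H) + (V(G_{r1}) - r1) + (V(G_{r2}) - r2) *)
Definition cvert : finType :=
  (T + {x : T1 | x != r1} + {x : T2 | x != r2})%type.

Definition embH (x : T) : cvert := inl (inl x).
Definition emb1 (u : T) (x : T1) : cvert :=
  match @insub T1 (fun y => y != r1) _ x with
  | Some y => inl (inr y) | None => inl (inl u) end.
Definition emb2 (u : T) (x : T2) : cvert :=
  match @insub T2 (fun y => y != r2) _ x with
  | Some y => inr y | None => inl (inl u) end.

(* H with r1 identified with a and r2 identified with b *)
Definition coal_edges (EH : {set {set T}}) (E1 : {set {set T1}})
    (E2 : {set {set T2}}) (a b : T) : {set {set cvert}} :=
  [set (embH @: e) | e : {set T} in EH] :|: [set (emb1 a @: e) | e : {set T1} in E1]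
    :|: [set (emb2 b @: e) | e : {set T2} in E2].

Definition V'G1 : {set cvert} := [set inl (inr y) | y : {x : T1 | x != r1}].
Definition VH : {set cvert} := [set embH x | x : T].
End Coalescence.

(* Main.v *)
Require Import Defs.
From HB Require Import structures.
From mathcomp Require Import all_boot all_order all_algebra.
From mathcomp Require Import boolp reals.
From mathcomp Require Import zify.
Set Implicit Arguments. Unset Strict Implicit. Unset Printing Implicit Defensive.

Section Walk.
Variable V : finType.
Variable E : {set {set V}}.

Definition adj (u v : V) : bool := (u == v) || [exists e in E, (u \in e) && (v \in e)].

Fixpoint reach (n : nat) (u v : V) : bool :=
  if n is n'.+1 then [exists w, adj u w && reach n' w v] else u == v.

Lemma adj_refl u : adj u u. Proof. by rewrite /adj eqxx. Qed.
Lemma adj_sym u v : adj u v -> adj v u.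
Proof.
rewrite /adj => /orP [/eqP->|/existsP [e /andP [he /andP [h1 h2]]]]; first by rewrite eqxx.
by apply/orP; right; apply/existsP; exists e; rewrite he h1 h2.
Qed.

Lemma reach0 u v : reach 0 u v = (u == v). Proof. by []. Qed.
Lemma reachS n u v : reach n.+1 u v = [exists w, adj u w && reach n w v]. Proof. by []. Qed.

Lemma reach_add a b u w v : reach a u w -> reach b w v -> reach (a + b) u v.
Proof.
elim: a u => [|a IH] u /=; first by move=> /eqP->.
move=> /existsP [w' /andP [h1 h2]] h3; apply/existsP; exists w'.
by rewrite h1 (IH _ h2 h3).
Qed.

Lemma reach_adj u v : adj u v -> reach 1 u v.
Proof. by move=> h; apply/existsP; exists v; rewrite h /= eqxx. Qed.

Lemma reach_mono n m u v : n <= m -> reach n u v -> reach m u v.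
Proof.
move=> /subnKC <- h; rewrite addnC.
elim: (m - n) => [//|k IH] /=.
by apply/existsP; exists u; rewrite adj_refl IH.
Qed.

Lemma reach_sym n u v : reach n u v -> reach n v u.
Proof.
elim: n u => [|n IH] u /=; first by rewrite eq_sym.
move=> /existsP [w /andP [h1 h2]].
have := reach_add (IH _ h2) (reach_adj (adj_sym h1)).
by rewrite addn1.
Qed.

Lemma reach0_eq n u v : reach n u v -> n = 0 -> u = v.
Proof. by move=> h e; subst n; apply/eqP. Qed.

Lemma reach_cut (A : pred V) (c : V) :
  (forall p q, A p -> ~~ A q -> adj p q -> q = c) ->
  forall n p q, A p -> ~~ A q -> reach n p q ->
  exists a b, [/\ a + b = n, reach a p c & reach b c q].
Proof.
move=> hc; elim=> [|n IH] p q hp hq /=.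
  by move=> /eqP e; subst q; rewrite hp in hq.
move=> /existsP [w /andP [h1 h2]].
case: (boolP (A w)) => hw.
  have [a [b [e ha hb]]] := IH _ _ hw hq h2.
  exists a.+1, b; split => //; first by rewrite addSn e.
  by apply/existsP; exists w; rewrite h1.
have ec := hc _ _ hp hw h1; subst w.
exists 1, n; split => //; exact: reach_adj.
Qed.

End Walk.

Lemma reach_hom (V W : finType) (E : {set {set V}}) (F : {set {set W}}) (f : V -> W) :
  (forall u v, adj E u v -> adj F (f u) (f v)) ->
  forall n u v, reach E n u v -> reach F n (f u) (f v).
Proof.
move=> hf; elim=> [|n IH] u v /=; first by move=> /eqP->.
move=> /existsP [w /andP [h1 h2]]; apply/existsP; exists (f w).
by rewrite hf // IH.
Qed.

Section Bridge.
Variable V : finType.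
Variable E : {set {set V}}.

Lemma is_pathP u v vs es :
  reflect [/\ size vs = (size es).+1, uniq vs, uniq es, all (fun e => e \in E) es &
      [/\ head u vs = u, last u vs = v &
      forall i, i < size es -> [/\ nth u vs i \in nth set0 es i,
                        nth u vs i.+1 \in nth set0 es i &
                        nth u vs i != nth u vs i.+1]]]
    (is_path E u v vs es).
Proof.
apply: (iffP idP).
  case/andP => /eqP h1 /andP [h2 /andP [h3 /andP [h4 /andP [/eqP h5 /andP [/eqP h6 /allP h7]]]]].
  split => //; split => // i hi; have := h7 i; rewrite mem_iota add0n hi => /(_ isT).
  by case/and3P.
case=> h1 h2 h3 h4 [h5 h6 h7]; rewrite /is_path h1 h2 h3 h4 h5 h6 !eqxx /=.
apply/allP => i; rewrite mem_iota add0n => /h7 [a b c]; by rewrite a b c.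
Qed.

Lemma path_seg u v vs es : is_path E u v vs es ->
  forall j t, j + t <= size es -> reach E t (nth u vs j) (nth u vs (j + t)).
Proof.
move=> /is_pathP [h1 h2 h3 h4 [h5 h6 h7]] j; elim=> [|t IH] hjt.
  by rewrite addn0 /=.
have hl : j + t < size es by rewrite -addnS.
have hr := IH (ltnW hl).
rewrite -addn1; apply: (reach_add hr); rewrite addn1 addnS.
apply: reach_adj; apply/orP; right; apply/existsP; exists (nth set0 es (j + t)).
have [a b _] := h7 _ hl; rewrite a b !andbT.
exact: (allP h4 _ (mem_nth _ hl)).
Qed.

Lemma path_reach u v vs es : is_path E u v vs es -> reach E (size es) u v.
Proof.
move=> hp; have := path_seg hp (j:=0) (t:=size es) (leqnn _).
move: hp => /is_pathP [h1 _ _ _ [h5 h6 _]].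
rewrite add0n nth0 h5 -h6 -nth_last h1 /=.
by [].

Qed.

Lemma reach_path n u v : reach E n u v -> (forall k, k < n -> ~~ reach E k u v) ->
  exists vs es, is_path E u v vs es /\ size es = n.
Proof.
elim: n u => [|n IH] u.
  move=> /eqP <- _; exists [:: u], [::]; split => //.
  by apply/is_pathP; split => //; split => //.
move=> /existsP [w /andP [huw hw]] hmin.
have hminw : forall k, k < n -> ~~ reach E k w v.
  move=> k hk; apply/negP => hr; have := hmin k.+1 hk.
  by rewrite /= ; move/negP; apply; apply/existsP; exists w; rewrite huw.
have [vs' [es' [hp hs]]] := IH _ hw hminw.
have hmin' := hmin n (ltnSn n).
move: huw; rewrite /adj => /orP [/eqP ew|].
  by subst w; case/negP: hmin'.
move=> /existsP [e /andP [he /andP [ue we]]].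
have hp' := hp.
move: hp' => /is_pathP [s1 s2 s3 s4 [s5 s6 s7]].
case: vs' hp s1 s2 s5 s6 s7 => [//|w0 vs''] hp s1 s2 s5 s6 s7.
move: s5 => /= s5; subst w0.
exists (u :: w :: vs''), (e :: es'); split; last by rewrite /= hs.
have unin : u \notin w :: vs''.
  apply/negP => hin.
  have hj := index_mem u (w :: vs''); rewrite hin in hj.
  set j := index u (w :: vs'') in hj.
  have hjn : j <= n by rewrite -ltnS -hs -s1.
  have := path_seg hp (j := j) (t := n - j); rewrite subnKC // hs => /(_ (leqnn _)).
  rewrite nth_index //.
  have -> : nth w (w :: vs'') n = v.
    by rewrite -s6 -nth_last s1 hs /=.
  move=> hr; have := hmin (n - j); rewrite ltnS leq_subr => /(_ isT).
  by rewrite hr.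
have enin : e \notin es'.
  apply/negP => hin.
  have hj := index_mem e es'; rewrite hin in hj.
  set j := index e es' in hj.
  have [_ b _] := s7 _ hj; rewrite nth_index // in b.
  have := path_seg hp (j := j.+1) (t := n - j.+1); rewrite subnKC -?hs //.
  move=> /(_ (leqnn _)).
  have -> : nth w (w :: vs'') (size es') = v.
    by rewrite -s6 -nth_last s1 /=.
  move=> hr.
  have hr2 : reach E (n - j) u v.
    have := reach_add (reach_adj (_ : adj E u (nth w (w :: vs'') j.+1))) hr.
    rewrite add1n subnSK // hs.
    by apply; apply/orP; right; apply/existsP; exists e; rewrite he ue b.
  have := hmin (n - j); rewrite ltnS leq_subr => /(_ isT).
  by rewrite hr2.
apply/is_pathP; split.
- by rewrite /= -s1.
- by rewrite cons_uniq unin s2.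
- by rewrite cons_uniq enin s3.
- by rewrite /= he s4.
split => //.
move=> [|i] hi /=.
  split => //.
  apply/negP => /eqP euw; subst w.
  by case/negP: hmin'.
have hi' : i < size es' by [].
have [a b c] := s7 _ hi'.
have sv : size vs'' = size es' by move: s1 => /= [].
have e1 : nth u (w :: vs'') i = nth w (w :: vs'') i.
  by apply: set_nth_default; rewrite /= sv ltnS ltnW.
have e2 : nth u vs'' i = nth w (w :: vs'') i.+1.
  by rewrite /=; apply: set_nth_default; rewrite sv.
by rewrite e1 e2; split.
Qed.
End Bridge.

Section Hdist.
Variable V : finType.
Variable E : {set {set V}}.

Lemma hpl_reach u v p : has_path_of_length E u v p -> reach E p u v.
Proof. by move=> /asboolP [vs [es [hp <-]]]; exact: path_reach hp. Qed.

Lemma hdist_spec u v : (exists n, reach E n u v) ->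
  reach E (hdist E u v) u v /\ (forall k, reach E k u v -> hdist E u v <= k).
Proof.
move=> hex.
pose P := fun k => reach E k u v.
have hexP : exists k, P k by [].
case: (ex_minnP hexP) => m hm hmin.
have hpm : has_path_of_length E u v m.
  apply/asboolP; apply: reach_path => // k hk; apply/negP => hr.
  by have := hmin k hr; rewrite leqNgt hk.
rewrite /hdist; case: pselect => [h|h]; last by exfalso; apply: h; exists m.
case: (ex_minnP h) => d hd hdmin; split; first exact: hpl_reach.
move=> k hk; apply: leq_trans (hdmin _ hpm) (hmin _ hk).
Qed.

Definition conn := forall u v, exists n, reach E n u v.

Lemma hconn_conn : hconnected E -> conn.
Proof. by move=> h u v; have [p hp] := h u v; exists p; exact: hpl_reach. Qed.

Hypothesis hc : conn.
Local Notation d := (hdist E).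

Lemma d_reach u v : reach E (d u v) u v. Proof. by case: (hdist_spec (hc u v)). Qed.
Lemma d_min u v k : reach E k u v -> d u v <= k. Proof. by case: (hdist_spec (hc u v)) => _; apply. Qed.

Lemma d_sym u v : d u v = d v u.
Proof. by apply/eqP; rewrite eqn_leq !d_min // reach_sym // d_reach. Qed.

Lemma d_tri u w v : d u v <= d u w + d w v.
Proof. by apply: d_min; apply: reach_add (d_reach u w) (d_reach w v). Qed.

Lemma d_eq0 u v : (d u v == 0) = (u == v).
Proof.
apply/eqP/eqP => [h|->].
  by have := d_reach u v; rewrite h => /eqP.
by apply/eqP; rewrite -leqn0 d_min //= eqxx.
Qed.

Lemma d_cut (A : pred V) c :
  (forall p q, A p -> ~~ A q -> adj E p q -> q = c) ->
  forall p q, A p -> ~~ A q -> d p q = d p c + d c q.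
Proof.
move=> hcut p q hp hq; apply/eqP; rewrite eqn_leq d_tri /=.
have [a [b [e ha hb]]] := reach_cut hcut hp hq (d_reach p q).
by rewrite -e leq_add // d_min.
Qed.
End Hdist.

Lemma d_hom (V W : finType) (E : {set {set V}}) (F : {set {set W}}) (f : V -> W) :
  conn E -> conn F -> (forall u v, adj E u v -> adj F (f u) (f v)) ->
  forall u v, hdist F (f u) (f v) <= hdist E u v.
Proof.
move=> hE hF hf u v; apply: d_min => //; apply: reach_hom hf _ _ _ (d_reach hE u v).
Qed.

Section Coal.
Variables (T T1 T2 : finType) (r1 : T1) (r2 : T2).
Variables (EH : {set {set T}}) (E1 : {set {set T1}}) (E2 : {set {set T2}}).
Variables (a b : T).
Hypotheses (cH : conn EH) (c1 : conn E1) (c2 : conn E2).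

Local Notation V := (@cvert T T1 T2 r1 r2).
Local Notation K := (@coal_edges T T1 T2 r1 r2 EH E1 E2 a b).
Local Notation eH := (@embH T T1 T2 r1 r2).
Local Notation e1 := (@emb1 T T1 T2 r1 r2 a).
Local Notation e2 := (@emb2 T T1 T2 r1 r2 b).

Definition piH (p : V) : T := match p with inl (inl x) => x | inl (inr _) => a | inr _ => b end.
Definition pi1 (p : V) : T1 := match p with inl (inr y) => val y | _ => r1 end.
Definition pi2 (p : V) : T2 := match p with inr y => val y | _ => r2 end.

Lemma e1_val (z : {x : T1 | x != r1}) : e1 (val z) = inl (inr z).
Proof. by rewrite /emb1 valK. Qed.
Lemma e2_val (y : {x : T2 | x != r2}) : e2 (val y) = inr y.
Proof. by rewrite /emb2 valK. Qed.
Lemma e1_r1 : e1 r1 = eH a.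
Proof. by rewrite /emb1 insubF // eqxx. Qed.
Lemma e2_r2 : e2 r2 = eH b.
Proof. by rewrite /emb2 insubF // eqxx. Qed.

Lemma e1_cases z : e1 z = eH a \/ exists y, e1 z = inl (inr y).
Proof. rewrite /emb1; case: insubP => [y _ _|_]; [right; by exists y | by left]. Qed.
Lemma e2_cases z : e2 z = eH b \/ exists y, e2 z = inr y.
Proof. rewrite /emb2; case: insubP => [y _ _|_]; [right; by exists y | by left]. Qed.

Lemma piH_eH x : piH (eH x) = x. Proof. by []. Qed.
Lemma piH_e1 z : piH (e1 z) = a. Proof. by case: (e1_cases z) => [->|[y ->]]. Qed.
Lemma piH_e2 z : piH (e2 z) = b. Proof. by case: (e2_cases z) => [->|[y ->]]. Qed.
Lemma pi1_eH x : pi1 (eH x) = r1. Proof. by []. Qed.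
Lemma pi1_e1 z : pi1 (e1 z) = z.
Proof. by rewrite /emb1; case: insubP => [y _ <-|/negbNE/eqP ->]. Qed.
Lemma pi1_e2 z : pi1 (e2 z) = r1. Proof. by case: (e2_cases z) => [->|[y ->]]. Qed.
Lemma pi2_eH x : pi2 (eH x) = r2. Proof. by []. Qed.
Lemma pi2_e1 z : pi2 (e1 z) = r2. Proof. by case: (e1_cases z) => [->|[y ->]]. Qed.
Lemma pi2_e2 z : pi2 (e2 z) = z.
Proof. by rewrite /emb2; case: insubP => [y _ <-|/negbNE/eqP ->]. Qed.

Lemma inK e' : e' \in K ->
  [\/ exists2 e, e \in EH & e' = eH @: e,
      exists2 e, e \in E1 & e' = e1 @: e |
      exists2 e, e \in E2 & e' = e2 @: e].
Proof.
rewrite /coal_edges !inE => /orP [/orP [] | ] /imsetP [e he ->].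
- by apply: Or31; exists e.
- by apply: Or32; exists e.
- by apply: Or33; exists e.
Qed.

Lemma adj_edge (W : finType) (F : {set {set W}}) e u v :
  e \in F -> u \in e -> v \in e -> adj F u v.
Proof. by move=> he hu hv; apply/orP; right; apply/existsP; exists e; rewrite he hu hv. Qed.

Lemma adj_cases (W : finType) (F : {set {set W}}) u v :
  adj F u v -> u = v \/ exists e, [/\ e \in F, u \in e & v \in e].
Proof.
by case/orP => [/eqP ->|/existsP [e /and3P [h1 h2 h3]]]; [left | right; exists e].
Qed.

Lemma hom_H x y : adj EH x y -> adj K (eH x) (eH y).
Proof.
case/adj_cases => [->|[e [he hx hy]]]; first exact: adj_refl.
apply: (adj_edge (e := eH @: e)); rewrite ?imset_f //.
by rewrite /coal_edges !inE imset_f.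
Qed.
Lemma hom_1 x y : adj E1 x y -> adj K (e1 x) (e1 y).
Proof.
case/adj_cases => [->|[e [he hx hy]]]; first exact: adj_refl.
apply: (adj_edge (e := e1 @: e)); rewrite ?imset_f //.
by rewrite /coal_edges !inE imset_f ?orbT.
Qed.
Lemma hom_2 x y : adj E2 x y -> adj K (e2 x) (e2 y).
Proof.
case/adj_cases => [->|[e [he hx hy]]]; first exact: adj_refl.
apply: (adj_edge (e := e2 @: e)); rewrite ?imset_f //.
by rewrite /coal_edges !inE imset_f ?orbT.
Qed.

Lemma ret_H p q : adj K p q -> adj EH (piH p) (piH q).
Proof.
case/adj_cases => [->|[e' [he hp hq]]]; first exact: adj_refl.
case: (inK he) => [[e he0 ->]|[e he0 ->]|[e he0 ->]] in hp hq.
- move: hp hq => /imsetP [x hx ->] /imsetP [y hy ->]; exact: adj_edge hx hy.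
- move: hp hq => /imsetP [x hx ->] /imsetP [y hy ->]; rewrite !piH_e1; exact: adj_refl.
- move: hp hq => /imsetP [x hx ->] /imsetP [y hy ->]; rewrite !piH_e2; exact: adj_refl.
Qed.
Lemma ret_1 p q : adj K p q -> adj E1 (pi1 p) (pi1 q).
Proof.
case/adj_cases => [->|[e' [he hp hq]]]; first exact: adj_refl.
case: (inK he) => [[e he0 ->]|[e he0 ->]|[e he0 ->]] in hp hq.
- move: hp hq => /imsetP [x hx ->] /imsetP [y hy ->]; exact: adj_refl.
- move: hp hq => /imsetP [x hx ->] /imsetP [y hy ->]; rewrite !pi1_e1; exact: adj_edge hx hy.
- move: hp hq => /imsetP [x hx ->] /imsetP [y hy ->]; rewrite !pi1_e2; exact: adj_refl.
Qed.
Lemma ret_2 p q : adj K p q -> adj E2 (pi2 p) (pi2 q).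
Proof.
case/adj_cases => [->|[e' [he hp hq]]]; first exact: adj_refl.
case: (inK he) => [[e he0 ->]|[e he0 ->]|[e he0 ->]] in hp hq.
- move: hp hq => /imsetP [x hx ->] /imsetP [y hy ->]; exact: adj_refl.
- move: hp hq => /imsetP [x hx ->] /imsetP [y hy ->]; rewrite !pi2_e1; exact: adj_refl.
- move: hp hq => /imsetP [x hx ->] /imsetP [y hy ->]; rewrite !pi2_e2; exact: adj_edge hx hy.
Qed.

Lemma reach_to_a p : exists n, reach K n p (eH a).
Proof.
case: p => [[x|z]|y].
- have [n hn] := cH x a; exists n; exact: reach_hom hom_H _ _ _ hn.
- have [n hn] := c1 (val z) r1; exists n; rewrite -e1_val -e1_r1.
  exact: reach_hom hom_1 _ _ _ hn.
- have [n hn] := c2 (val y) r2; have [m hm] := cH b a.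
  exists (n + m); apply: reach_add (_ : reach K n _ (eH b)) _.
    by rewrite -e2_val -e2_r2; exact: reach_hom hom_2 _ _ _ hn.
  exact: reach_hom hom_H _ _ _ hm.
Qed.

Lemma cK : conn K.
Proof.
move=> p q; have [n hn] := reach_to_a p; have [m hm] := reach_to_a q.
exists (n + m); exact: reach_add hn (reach_sym hm).
Qed.

Local Notation dK := (hdist K).
Local Notation dH := (hdist EH).
Local Notation d1 := (hdist E1).
Local Notation d2 := (hdist E2).

Lemma dK_H x y : dK (eH x) (eH y) = dH x y.
Proof.
apply/eqP; rewrite eqn_leq (d_hom cH cK hom_H) /=.
by have := d_hom cK cH ret_H (eH x) (eH y).
Qed.
Lemma dK_1 x y : dK (e1 x) (e1 y) = d1 x y.
Proof.
apply/eqP; rewrite eqn_leq (d_hom c1 cK hom_1) /=.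
by have := d_hom cK c1 ret_1 (e1 x) (e1 y); rewrite !pi1_e1.
Qed.
Lemma dK_2 x y : dK (e2 x) (e2 y) = d2 x y.
Proof.
apply/eqP; rewrite eqn_leq (d_hom c2 cK hom_2) /=.
by have := d_hom cK c2 ret_2 (e2 x) (e2 y); rewrite !pi2_e2.
Qed.

Definition isA1 (p : V) : bool := if p is inl (inr _) then true else false.
Definition isA2 (p : V) : bool := if p is inr _ then true else false.

Lemma cut1 p q : isA1 p -> ~~ isA1 q -> adj K p q -> q = eH a.
Proof.
move=> hp hq /adj_cases [e|[e' [he hpe hqe]]]; first by subst q; rewrite hp in hq.
case: (inK he) => [[e he0 ee]|[e he0 ee]|[e he0 ee]]; subst e'.
- by move: hpe => /imsetP [x _ ex]; subst p; rewrite /embH /= in hp.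
- move: hqe hq => /imsetP [x _ ->]; case: (e1_cases x) => [//|[y ey]].
  by rewrite ey.
- by move: hpe => /imsetP [x _ ex]; subst p; case: (e2_cases x) hp => [->|[y ->]].
Qed.
Lemma cut2 p q : isA2 p -> ~~ isA2 q -> adj K p q -> q = eH b.
Proof.
move=> hp hq /adj_cases [e|[e' [he hpe hqe]]]; first by subst q; rewrite hp in hq.
case: (inK he) => [[e he0 ee]|[e he0 ee]|[e he0 ee]]; subst e'.
- by move: hpe => /imsetP [x _ ex]; subst p; rewrite /embH /= in hp.
- by move: hpe => /imsetP [x _ ex]; subst p; case: (e1_cases x) hp => [->|[y ->]].
- move: hqe hq => /imsetP [x _ ->]; case: (e2_cases x) => [//|[y ey]].
  by rewrite ey.
Qed.

Lemma dK_sym p q : dK p q = dK q p. Proof. exact: d_sym cK p q. Qed.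

Lemma dK_H1 x (z : {x : T1 | x != r1}) : dK (eH x) (inl (inr z)) = dH x a + d1 r1 (val z).
Proof.
rewrite dK_sym (d_cut cK cut1) // -e1_val -{1}e1_r1 dK_1 dK_H.
by rewrite addnC (d_sym c1) (d_sym cH).
Qed.
Lemma dK_H2 x (y : {x : T2 | x != r2}) : dK (eH x) (inr y) = dH x b + d2 r2 (val y).
Proof.
rewrite dK_sym (d_cut cK cut2) // -e2_val -{1}e2_r2 dK_2 dK_H.
by rewrite addnC (d_sym c2) (d_sym cH).
Qed.
Lemma dK_12 (z : {x : T1 | x != r1}) (y : {x : T2 | x != r2}) :
  dK (inl (inr z)) (inr y) = d1 r1 (val z) + dH a b + d2 r2 (val y).
Proof.
rewrite dK_sym (d_cut cK cut2) // -{1}e2_val -{1}e2_r2 dK_2 dK_H1.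
rewrite (d_sym c2 (val y)) (d_sym cH b); lia.
Qed.
End Coal.

Lemma twin (V : finType) (E : {set {set V}}) (u1 u2 : V) :
  conn E -> hdeg E u1 = 1 -> hdist E u1 u2 = 1 ->
  forall x, x != u1 -> hdist E u2 x <= hdist E u1 x.
Proof.
move=> hc hdeg hd.
have h12 : u1 != u2 by rewrite -(d_eq0 hc) hd.
have hr := d_reach hc u1 u2; rewrite hd /= in hr.
move: hr => /existsP [w /andP [haw /eqP ew]]; subst w.
case/adj_cases: haw => [e12|[e0 [he0 h10 h20]]]; first by rewrite e12 eqxx in h12.
have key : forall w, adj E u1 w -> w != u1 -> adj E u2 w.
  move=> w /adj_cases [->|[e [he h1 hw]]]; first by rewrite eqxx.
  move=> _; move: hdeg => /eqP/cards1P [e1 he1].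
  have : e \in [set e in E | u1 \in e] by rewrite inE he h1.
  have : e0 \in [set e in E | u1 \in e] by rewrite inE he0 h10.
  rewrite he1 !inE => /eqP ee0 /eqP ee.
  by apply: (adj_edge he0 h20); rewrite ee0 -ee.
have ind : forall n x, x != u1 -> reach E n u1 x -> reach E n u2 x.
  elim=> [|n IH] x hx /=; first by move=> /eqP e; rewrite e eqxx in hx.
  move=> /existsP [w /andP [hw hr]].
  case: (eqVneq w u1) => [ew|nw].
    subst w; have := IH _ hx hr => hr2.
    by apply/existsP; exists u2; rewrite adj_refl.
  by apply/existsP; exists w; rewrite key.
by move=> x hx; apply: (d_min hc); apply: ind hx (d_reach hc _ _).
Qed.

Lemma nonroot (W : finType) (E : {set {set W}}) (r : W) :
  hypergraph E -> E != set0 -> exists y : {x : W | x != r}, True.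
Proof.
move=> hyp /set0Pn [e he]; have h2 := hyp e he.
have : 0 < #|e :\ r|.
  move: h2; rewrite (cardsD1 r e); case: (r \in e) => /=; lia.
rewrite card_gt0 => /set0Pn [y]; rewrite !inE => /andP [hy _].
by exists (exist _ y hy).
Qed.


From mathcomp Require Import sesquilinear spectral complex.
From mathcomp Require Import ring lra.
Import Order.TTheory GRing.Theory Num.Theory Num.Def.
Local Open Scope ring_scope.

Lemma qfE (R : comRingType) n (M : 'M[R]_n) (x y : 'cV[R]_n) :
  (x^T *m M *m y) 0 0 = \sum_i \sum_j x i 0 * M i j * y j 0.
Proof.
rewrite mxE exchange_big /=; apply: eq_bigr => j _.
rewrite !mxE mulr_suml; apply: eq_bigr => i _; by rewrite !mxE.
Qed.

Lemma qfE2 (R : comRingType) n (x y : 'cV[R]_n) :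
  (x^T *m y) 0 0 = \sum_i x i 0 * y i 0.
Proof. by rewrite mxE; apply: eq_bigr => i _; rewrite !mxE. Qed.
Section PSD.
Variable R : realFieldType.
Variable n : nat.
Variable B : 'M[R]_n.
Hypothesis hB : B^T = B.
Definition bil (x y : 'cV[R]_n) := (x^T *m B *m y) 0 0.
Hypothesis hpos : forall x, 0 <= bil x x.

Lemma bilDr x y z : bil x (y + z) = bil x y + bil x z.
Proof. by rewrite /bil mulmxDr mxE. Qed.
Lemma bilZr x t y : bil x (t *: y) = t * bil x y.
Proof. by rewrite /bil -scalemxAr mxE. Qed.
Lemma bilC x y : bil x y = bil y x.
Proof.
rewrite /bil -[in LHS](trmxK (x^T *m B *m y)) mxE.
by rewrite !trmx_mul trmxK hB mulmxA.
Qed.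
Lemma bilDl x y z : bil (x + y) z = bil x z + bil y z.
Proof. by rewrite bilC bilDr !(bilC z). Qed.
Lemma bilZl x t y : bil (t *: x) y = t * bil x y.
Proof. by rewrite bilC bilZr bilC. Qed.

Lemma psd_kernel w : bil w w = 0 -> B *m w = 0.
Proof.
move=> hw.
have key : forall y, bil y w = 0.
  move=> y; set s := bil y w; set c := bil y y.
  have hc := hpos y.
  have := hpos (w + (- s / (c + 1)) *: y).
  rewrite bilDl !bilDr hw bilZl bilZr bilZl bilZr (bilC w y) -/s -/c.
  have c1 : 0 < c + 1 by rewrite ltr_wpDl.
  move=> h.
  have : 0 <= s ^+ 2 * (- c - 2) / (c + 1) ^+ 2.
    set z := (X in 0 <= X) in h.
    suff <- : z = s ^+ 2 * (- c - 2) / (c + 1) ^+ 2 by [].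
    rewrite /z; field; exact: lt0r_neq0.
  rewrite pmulr_lge0 ?invr_gt0 ?exprn_gt0 // => h'.
  have s2 : s ^+ 2 <= 0 by nra.
  by apply/eqP; rewrite -sqrf_eq0 eq_le s2 sqr_ge0.
apply/matrixP => i j; rewrite ord1.
have := key (delta_mx i 0); rewrite /bil trmx_delta -mulmxA -rowE.
move=> h. rewrite [X in _ = X]mxE -h; by rewrite !mxE.
Qed.
End PSD.
Section Ray.
Variable R : rcfType.
Local Notation C := (R[i]).
Local Notation f := (real_complex R).

Lemma f0 : f 0 = 0 :> C. Proof. exact: rmorph0. Qed.

Lemma Creal_f (r : R) : (f r : C) \is Num.real.
Proof.
case: (lerP 0 r) => h; [apply/ger0_real | apply/ler0_real]; rewrite -f0 lecR //.
exact: ltW.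
Qed.

Lemma conj_f (r : R) : (f r : C)^* = f r.
Proof. exact/CrealP/Creal_f. Qed.

Lemma real_of_Creal (z : C) : z \is Num.real -> exists r, z = f r.
Proof. by move=> /Creal_ReP h; exists (complex.Re z); rewrite complexRe h. Qed.

Variable n : nat.
Variable A : 'M[R]_n.
Hypothesis hA : A^T = A.
Variable rho : R.
Hypothesis hmax : forall a, eigenvalue A a -> a <= rho.

Let A' := map_mx f A.

Lemma herm_A' : A' \is hermsymmx.
Proof.
apply/is_hermitianmxP; rewrite expr0 scale1r; apply/matrixP => i j.
by rewrite !mxE conj_f -[in RHS]hA mxE.
Qed.

Let P := spectralmx A'.
Let d := spectral_diag A'.

Lemma hP : A' = invmx P *m diag_mx d *m P.
Proof. exact/orthomx_spectralP/hermitian_normalmx/herm_A'. Qed.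

Lemma PU : P \is unitarymx. Proof. exact: spectral_unitarymx. Qed.

Lemma PtP : map_mx conjC P^T *m P = 1%:M.
Proof. by rewrite -invmx_unitary ?PU // mulVmx // unitarymx_unit // PU. Qed.

Lemma d_eig i : eigenvalue A' (d 0 i).
Proof.
apply/eigenvalueP; exists (row i P).
  have e : P *m A' = diag_mx d *m P.
    by rewrite hP !mulmxA mulmxV ?mul1mx // unitarymx_unit // PU.
  rewrite -row_mul e mul_diag_mx; apply/rowP => j; rewrite !mxE //.
apply/eqP => h0.
have := congr1 (row i) (unitarymxP PU); rewrite row_mul h0 mul0mx.
move/rowP/(_ i); rewrite !mxE eqxx /=.
by move/eqP; rewrite eq_sym oner_eq0.
Qed.

Lemma d_le i : d 0 i <= f rho.
Proof.
have /mxOverP/(_ 0 i) := hermitian_spectral_diag_real herm_A'.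
move=> /real_of_Creal [r hr]; rewrite hr lecR; apply: hmax.
have := d_eig i; rewrite hr !eigenvalue_root_char.
by rewrite -map_char_poly fmorph_root.
Qed.

Lemma rayleigh (x : 'cV[R]_n) : (x^T *m A *m x) 0 0 <= rho * (x^T *m x) 0 0.
Proof.
rewrite -lecR.
set x' := map_mx f x.
set y := P *m x'.
have ex' : map_mx conjC x'^T = x'^T.
  by apply/matrixP => i j; rewrite !mxE conj_f.
have e1 : x'^T *m map_mx conjC P^T = map_mx conjC y^T.
  by rewrite /y trmx_mul map_mxM ex'.
have q1 : f ((x^T *m A *m x) 0 0) = (map_mx conjC y^T *m diag_mx d *m y) 0 0.
  have E : f ((x^T *m A *m x) 0 0) = (map_mx f (x^T *m A *m x)) 0 0.
    by rewrite [RHS]mxE.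
  rewrite E -e1.
  rewrite map_mxM map_mxM map_trmx -/x' -/A' hP.
  by rewrite invmx_unitary ?PU // !mulmxA.
have q2 : f ((x^T *m x) 0 0) = (map_mx conjC y^T *m y) 0 0.
  have E : f ((x^T *m x) 0 0) = (map_mx f (x^T *m x)) 0 0.
    by rewrite [RHS]mxE.
  rewrite E -e1.
  rewrite map_mxM map_trmx -/x'.
  by rewrite -mulmxA [map_mx _ _ *m (P *m _)]mulmxA PtP mul1mx.
have E : f (rho * (x^T *m x) 0 0) = f rho * f ((x^T *m x) 0 0) by exact: rmorphM.
rewrite E q1 q2 !mxE mulr_sumr; apply: ler_sum => j _.
rewrite mul_mx_diag !mxE.
move: (\sum_j0 _) => c.
have hc : 0 <= conjC c * c by rewrite mulrC mul_conjC_ge0.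
rewrite -mulrA [d 0 j * c]mulrC mulrA [X in _ <= X]mulrC.
apply: ler_wpM2l => //; exact: d_le.
Qed.
End Ray.
Lemma perron_exists (R : rcfType) n (A : 'M[R]_n) rho :
  A^T = A -> (forall i j, 0 <= A i j) -> (forall i j, i != j -> 0 < A i j) ->
  (exists i j : 'I_n, i != j) ->
  eigenvalue A rho -> (forall a, eigenvalue A a -> a <= rho) ->
  exists x : 'cV[R]_n, [/\ forall i, 0 < x i 0, \sum_i x i 0 ^+ 2 = 1 & A *m x = rho *: x].
Proof.
move=> hA hpos hoff [i0 [j0 hij0]] /eigenvalueP [v hv vn0] hmax.
pose w : 'cV[R]_n := \col_i `|v 0 i|.
have hR := rayleigh hA hmax w.
have ev : forall i, rho * v 0 i = \sum_j v 0 j * A i j.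
  move=> i; have := congr1 (fun M : 'rV[R]_n => M 0 i) hv.
  rewrite /= !mxE => <-.
  apply: eq_bigr => j _. rewrite -[in RHS]hA. by rewrite mxE.
have hL : rho * (w^T *m w) 0 0 <= (w^T *m A *m w) 0 0.
  rewrite qfE qfE2 mulr_sumr.
  have -> : \sum_i rho * (w i 0 * w i 0) = \sum_i \sum_j v 0 i * A i j * v 0 j.
    apply: eq_bigr => i _.
    rewrite !mxE -expr2 real_normK ?num_real // expr2 mulrCA ev mulr_sumr.
    by apply: eq_bigr => j _; rewrite [v 0 j * _]mulrC mulrA.
  apply: ler_sum => i _; apply: ler_sum => j _; rewrite !mxE.
  rewrite mulrAC [X in _ <= X]mulrAC; apply: ler_wpM2r => //.
  rewrite -normrM; exact: ler_norm.
have eqq : (w^T *m A *m w) 0 0 = rho * (w^T *m w) 0 0 by apply/eqP; rewrite eq_le hR hL.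
pose B := rho%:M - A.
have bilE : forall x, bil B x x = rho * (x^T *m x) 0 0 - (x^T *m A *m x) 0 0.
  move=> x; rewrite /bil /B mulmxBr mulmxBl mul_mx_scalar -scalemxAl.
  by rewrite !mxE.
have hBt : B^T = B by rewrite /B linearB /= tr_scalar_mx hA.
have hBw : B *m w = 0.
  apply: (psd_kernel hBt).
    by move=> x; rewrite bilE subr_ge0; exact: rayleigh.
  by rewrite bilE eqq subrr.
have Aw : A *m w = rho *: w.
  by apply/eqP; rewrite eq_sym -subr_eq0 -mul_scalar_mx -mulmxBl -/B hBw.
have wnn : forall i, 0 <= w i 0 by move=> i; rewrite mxE.
have [k hk] : exists k, 0 < w k 0.
  apply/existsP; move: vn0; apply: contraR; rewrite negb_exists => /forallP h.
  apply/eqP/rowP => j; rewrite !mxE; have := h j.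
  by rewrite mxE normr_gt0 negbK => /eqP.
have wpos : forall i, 0 < w i 0.
  move=> i; have [->|hik] := eqVneq i k; first exact: hk.
  have h1 : 0 < rho * w i 0.
    have := congr1 (fun M : 'cV[R]_n => M i 0) Aw; rewrite /= [RHS]mxE => <-.
    rewrite mxE (bigD1 k) //= ltr_pwDl ?mulr_gt0 ?hoff //.
    by apply: sumr_ge0 => j _; rewrite mulr_ge0.
  rewrite lt0r wnn andbT; apply/eqP => h0; move: h1; by rewrite h0 mulr0 ltxx.
pose s := \sum_i w i 0 ^+ 2.
have spos : 0 < s.
  rewrite /s (bigD1 k) //= ltr_pwDl ?exprn_gt0 //.
  by apply: sumr_ge0 => j _; rewrite sqr_ge0.
exists ((Num.sqrt s)^-1 *: w); split.
- by move=> i; rewrite mxE mulr_gt0 ?invr_gt0 ?sqrtr_gt0.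
- under eq_bigr => i _ do rewrite mxE exprMn exprVn sqr_sqrtr ?ltW //.
  by rewrite -mulr_sumr mulVf // lt0r_neq0.
- by rewrite -scalemxAr Aw scalerA mulrC -scalerA.
Qed.

Lemma sum_ord (R : realType) (W : finType) (G : 'I_#|W| -> R) :
  \sum_i G i = \sum_(w : W) G (enum_rank w).
Proof.
rewrite (reindex (@enum_rank W)) //; exists enum_val => i _; [exact: enum_rankK | exact: enum_valK].
Qed.

Lemma sum_sum (R : realType) (I1 I2 : finType) (G : I1 + I2 -> R) :
  \sum_q G q = \sum_x G (inl x) + \sum_y G (inr y).
Proof. by rewrite big_sumType. Qed.

Lemma qf_dist (R : realType) (W : finType) (E : {set {set W}}) (x : 'cV[R]_#|W|) :
  (x^T *m dist_mx R E *m x) 0 0 =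
  \sum_p \sum_q ventry x p * (hdist E p q)%:R * ventry x q.
Proof.
rewrite qfE sum_ord; apply: eq_bigr => p _; rewrite sum_ord; apply: eq_bigr => q _.
by rewrite /dist_mx mxE !enum_rankK.
Qed.

Lemma row_dist (R : realType) (W : finType) (E : {set {set W}}) (x : 'cV[R]_#|W|) p :
  (dist_mx R E *m x) (enum_rank p) 0 = \sum_q (hdist E p q)%:R * ventry x q.
Proof.
rewrite mxE sum_ord; apply: eq_bigr => q _.
by rewrite /dist_mx mxE !enum_rankK.
Qed.

Lemma dist_sym (R : realType) (W : finType) (E : {set {set W}}) :
  conn E -> (dist_mx R E)^T = dist_mx R E.
Proof. by move=> hc; apply/matrixP => i j; rewrite !mxE (d_sym hc). Qed.

Section Delta.
Variable R : realType.
Variables (T T1 T2 : finType) (r1 : T1) (r2 : T2).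
Variables (EH : {set {set T}}) (E1 : {set {set T1}}) (E2 : {set {set T2}}).
Hypotheses (cH : conn EH) (c1 : conn E1) (c2 : conn E2).
Local Notation V := (@cvert T T1 T2 r1 r2).
Local Notation K a b := (@coal_edges T T1 T2 r1 r2 EH E1 E2 a b).
Local Notation dH := (hdist EH).
Local Notation d1 := (hdist E1).
Local Notation d2 := (hdist E2).

Lemma dK_HH a b x x' : hdist (K a b) (inl (inl x)) (inl (inl x')) = dH x x'.
Proof. exact: (dK_H r1 r2 a b cH c1 c2). Qed.
Lemma dK_11 a b (z z' : {x : T1 | x != r1}) :
  hdist (K a b) (inl (inr z)) (inl (inr z')) = d1 (val z) (val z').
Proof. by rewrite -!(e1_val r2 a) (dK_1 r1 r2 a b cH c1 c2). Qed.
Lemma dK_22 a b (y y' : {x : T2 | x != r2}) :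
  hdist (K a b) (inr y) (inr y') = d2 (val y) (val y').
Proof. by rewrite -!(@e2_val T T1 T2 r1 r2 b) (dK_2 r1 r2 a b cH c1 c2). Qed.
Lemma dK_H1' a b x z : hdist (K a b) (inl (inl x)) (inl (inr z)) = dH x a + d1 r1 (val z).
Proof. exact: (@dK_H1 _ _ _ r1 r2 _ _ _ a b cH c1 c2). Qed.
Lemma dK_H2' a b x y : hdist (K a b) (inl (inl x)) (inr y) = dH x b + d2 r2 (val y).
Proof. exact: (@dK_H2 _ _ _ r1 r2 _ _ _ a b cH c1 c2). Qed.
Lemma dK_12' a b z y : hdist (K a b) (inl (inr z)) (inr y) = d1 r1 (val z) + dH a b + d2 r2 (val y).
Proof. exact: (@dK_12 _ _ _ r1 r2 _ _ _ a b cH c1 c2). Qed.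
Lemma dK_1H' a b x z : hdist (K a b) (inl (inr z)) (inl (inl x)) = dH x a + d1 r1 (val z).
Proof. by rewrite (dK_sym a b cH c1 c2) dK_H1'. Qed.
Lemma dK_2H' a b x y : hdist (K a b) (inr y) (inl (inl x)) = dH x b + d2 r2 (val y).
Proof. by rewrite (dK_sym a b cH c1 c2) dK_H2'. Qed.
Lemma dK_21' a b z y : hdist (K a b) (inr y) (inl (inr z)) = d1 r1 (val z) + dH a b + d2 r2 (val y).
Proof. by rewrite (dK_sym a b cH c1 c2) dK_12'. Qed.

Definition Qf (E : {set {set V}}) (X : V -> R) := \sum_p \sum_q X p * (hdist E p q)%:R * X q.

Variables (u1 u2 : T).

Lemma sumV (G : V -> R) : \sum_q G q =
  \sum_x G (inl (inl x)) + \sum_z G (inl (inr z)) + \sum_y G (inr y).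
Proof. by rewrite !sum_sum. Qed.

Local Notation M p q := ((hdist (K u1 u2) p q)%:R - (hdist (K u1 u1) p q)%:R : R).

Lemma rowH (X : V -> R) x : \sum_q M (inl (inl x)) q * X q =
  ((dH x u2)%:R - (dH x u1)%:R) * \sum_y X (inr y).
Proof.
rewrite sumV big1 ?add0r; last by move=> x0 _; rewrite !dK_HH subrr mul0r.
rewrite big1 ?add0r; last by move=> z _; rewrite !dK_H1' subrr mul0r.
rewrite mulr_sumr; apply: eq_bigr => y _; rewrite !dK_H2' !natrD; ring.
Qed.

Lemma row1 (X : V -> R) z : \sum_q M (inl (inr z)) q * X q =
  (dH u1 u2)%:R * \sum_y X (inr y).
Proof.
rewrite sumV big1 ?add0r; last by move=> x0 _; rewrite !dK_1H' subrr mul0r.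
rewrite big1 ?add0r; last by move=> z' _; rewrite !dK_11 subrr mul0r.
rewrite mulr_sumr; apply: eq_bigr => y _; rewrite !dK_12' !natrD.
have -> : dH u1 u1 = 0%N by apply/eqP; rewrite (d_eq0 cH).
ring.
Qed.

Lemma row2 (X : V -> R) y : \sum_q M (inr y) q * X q =
   \sum_x ((dH x u2)%:R - (dH x u1)%:R) * X (inl (inl x)) +
    (dH u1 u2)%:R * \sum_z X (inl (inr z)).
Proof.
rewrite sumV [X in _ + _ + X]big1 ?addr0; last by move=> y' _; rewrite !dK_22 subrr mul0r.
congr (_ + _).
  by apply: eq_bigr => x _; rewrite !dK_2H' !natrD; ring.
rewrite mulr_sumr; apply: eq_bigr => z _; rewrite !dK_21' !natrD.
have -> : dH u1 u1 = 0%N by apply/eqP; rewrite (d_eq0 cH).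
ring.
Qed.

Lemma delta (X : V -> R) :
  Qf (K u1 u2) X - Qf (K u1 u1) X =
  2 * (\sum_y X (inr y)) *
   (\sum_x ((dH x u2)%:R - (dH x u1)%:R) * X (inl (inl x)) +
    (dH u1 u2)%:R * \sum_z X (inl (inr z))).
Proof.
rewrite /Qf -sumrB.
have hrow : forall p, \sum_q X p * (hdist (K u1 u2) p q)%:R * X q -
                      \sum_q X p * (hdist (K u1 u1) p q)%:R * X q =
   X p * \sum_q M p q * X q.
  move=> p; rewrite -sumrB mulr_sumr; apply: eq_bigr => q _; ring.
under eq_bigr => p _ do rewrite hrow.
rewrite sumV.
under eq_bigr => x _ do rewrite rowH.
under [in X in _ + X + _]eq_bigr => z _ do rewrite row1.
under [in X in _ + X]eq_bigr => y _ do rewrite row2.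
set S2 := \sum_y X (inr y).
set B := (X in _ = _ * X).
rewrite -mulr_suml -[X in _ + _ + X]mulr_suml -/S2.
have -> : \sum_i X (inl (inl i)) * (((dH i u2)%:R - (dH i u1)%:R) * S2) =
  (\sum_x ((dH x u2)%:R - (dH x u1)%:R) * X (inl (inl x))) * S2.
  by rewrite mulr_suml; apply: eq_bigr => x _; ring.
rewrite /B; ring.
Qed.
End Delta.

Section Main.
Variable R : realType.
Variables (T T1 T2 : finType) (EH : {set {set T}}) (E1 : {set {set T1}}) (E2 : {set {set T2}}).
Variables (r1 : T1) (r2 : T2) (u1 u2 : T).
Hypotheses (cH : conn EH) (c1 : conn E1) (c2 : conn E2).
Local Notation V := (@cvert T T1 T2 r1 r2).
Local Notation K1 := (@coal_edges T T1 T2 r1 r2 EH E1 E2 u1 u1).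
Local Notation K2 := (@coal_edges T T1 T2 r1 r2 EH E1 E2 u1 u2).
Local Notation D1 := (dist_mx R K1).
Local Notation D2 := (dist_mx R K2).
Local Notation dH := (hdist EH).

Definition Bx (X : V -> R) :=
  \sum_x ((dH x u2)%:R - (dH x u1)%:R) * X (inl (inl x)) +
    (dH u1 u2)%:R * \sum_z X (inl (inr z)).

Lemma core rho1 rho2 (x : 'cV[R]_#|V|) :
  largest_eigenvalue D2 rho2 ->
  \sum_i x i 0 ^+ 2 = 1 -> D1 *m x = rho1 *: x ->
  0 < \sum_y ventry x (inr y) -> 0 < Bx (ventry x) -> rho1 < rho2.
Proof.
move=> [_ hmax2] hn heig hS2 hB.
have cK2 : conn K2 := cK u1 u2 cH c1 c2.
have xx : (x^T *m x) 0 0 = 1.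
  by rewrite qfE2 -hn; apply: eq_bigr => i _; rewrite expr2.
have Q1 : Qf K1 (ventry x) = rho1.
  rewrite /Qf -qf_dist -mulmxA heig -scalemxAr mxE xx mulr1 //.
have Q2 : Qf K2 (ventry x) <= rho2.
  by rewrite /Qf -qf_dist -[rho2]mulr1 -xx; apply: rayleigh => //; exact: dist_sym.
have hd := delta cH c1 c2 u1 u2 (ventry x).
rewrite -/(Bx _) in hd.
have : 0 < 2 * (\sum_y ventry x (inr y)) * Bx (ventry x).
  by rewrite mulr_gt0 // mulr_gt0.
lra.
Qed.

Lemma pos_sum (I : finType) (G : I -> R) (i0 : I) :
  (forall i, 0 < G i) -> 0 < \sum_i G i.
Proof.
move=> hG; rewrite (bigD1 i0) //= ltr_pwDl //.
by apply: sumr_ge0 => i _; apply: ltW.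
Qed.

Lemma sigma_G1 (x : 'cV[R]_#|V|) :
  sigma x (@V'G1 T T1 T2 r1 r2) = \sum_z ventry x (inl (inr z)).
Proof.
rewrite /sigma /V'G1 big_imset /=; last by move=> a b _ _ [].
by apply: eq_bigl => z; rewrite inE.
Qed.

Lemma sigma_H (x : 'cV[R]_#|V|) :
  sigma x (@VH T T1 T2 r1 r2) = \sum_z ventry x (inl (inl z)).
Proof.
rewrite /sigma /VH big_imset /=; last by move=> a b _ _ [].
by apply: eq_bigl => z; rewrite inE.
Qed.

Lemma case2_B (x : 'cV[R]_#|V|) : u1 != u2 -> (forall i, 0 < x i 0) ->
  sigma x (@V'G1 T T1 T2 r1 r2) + ventry x (@embH T T1 T2 r1 r2 u1) >= sigma x (@VH T T1 T2 r1 r2) ->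
  0 < Bx (ventry x).
Proof.
move=> hu hx; rewrite sigma_G1 sigma_H /embH.
set S1 := \sum_z ventry x (inl (inr z)).
have hpos : forall p, 0 < ventry x p by move=> p; exact: hx.
rewrite (bigD1 u1) //= => hyp.
rewrite /Bx (bigD1 u1) //= -/S1.
have d11 : dH u1 u1 = 0%N by apply/eqP; rewrite (d_eq0 cH).
set del := dH u1 u2.
have hdel : (0 < del)%N by rewrite lt0n (d_eq0 cH).
have hdelR : 1 <= (del%:R : R) by rewrite ler1n.
rewrite d11 subr0.
set Sr := \sum_(i | i != u1) ventry x (inl (inl i)).
have hrest : - (del%:R) * Sr <=
    \sum_(i | i != u1) ((dH i u2)%:R - (dH i u1)%:R) * ventry x (inl (inl i)).
  rewrite /Sr mulr_sumr; apply: ler_sum => i _.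
  rewrite ler_pM2r //.
  have : (dH i u1 <= dH i u2 + del)%N.
    by rewrite /del (d_sym cH u1 u2); apply: d_tri.
  rewrite -(ler_nat R) natrD; lra.
have h1 := hpos (inl (inl u1)).
have hS : 0 <= S1 - Sr by rewrite -/Sr in hyp; lra.
have : 0 < del%:R * ventry x (inl (inl u1)) + del%:R * (S1 - Sr).
  rewrite ltr_pwDl ?mulr_ge0 ?mulr_gt0 //; lra.
lra.
Qed.

Lemma rowK1 (x : 'cV[R]_#|V|) rho1 p : D1 *m x = rho1 *: x ->
  \sum_q (hdist K1 p q)%:R * ventry x q = rho1 * ventry x p.
Proof.
move=> heig; rewrite -row_dist heig mxE //.
Qed.

Lemma sum_diff (h : T -> R) : u1 != u2 ->
  (forall v, v != u1 -> v != u2 -> dH v u1 = dH v u2) -> dH u1 u2 = 1%N ->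
  \sum_v ((dH v u2)%:R - (dH v u1)%:R) * h v = h u1 - h u2.
Proof.
move=> hu heq hd.
have d11 : dH u1 u1 = 0%N by apply/eqP; rewrite (d_eq0 cH).
have d22 : dH u2 u2 = 0%N by apply/eqP; rewrite (d_eq0 cH).
rewrite (bigD1 u1) //= (bigD1 u2) 1?eq_sym //= big1 ?addr0.
  by rewrite hd d11 d22 (d_sym cH u2 u1) hd; ring.
by move=> v /andP [h2 h1]; rewrite (heq v h2 h1) subrr mul0r.
Qed.

Lemma case1_B (x : 'cV[R]_#|V|) rho1 :
  hdeg EH u1 = 1%N -> hdeg EH u2 = 1%N -> dH u1 u2 = 1%N ->
  (forall i, 0 < x i 0) -> D1 *m x = rho1 *: x ->
  (exists z : {x : T1 | x != r1}, True) -> (exists y : {x : T2 | x != r2}, True) ->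
  0 < Bx (ventry x).
Proof.
move=> hg1 hg2 hd hx heig [z0 _] [y0 _].
have hpos : forall p, 0 < ventry x p by move=> p; exact: hx.
have hu : u1 != u2 by rewrite -(d_eq0 cH) hd.
have hd' : dH u2 u1 = 1%N by rewrite (d_sym cH) hd.
have heq : forall v, v != u1 -> v != u2 -> dH v u1 = dH v u2.
  move=> v h1 h2; apply/eqP; rewrite eqn_leq.
  rewrite (d_sym cH v u1) (d_sym cH v u2) (twin cH hg1 hd h1) /=.
  by rewrite andbT; exact: (twin cH hg2 hd' h2).
set S1 := \sum_z ventry x (inl (inr z)).
set S2 := \sum_y ventry x (inr y).
set h1 := ventry x (inl (inl u1)).
set h2 := ventry x (inl (inl u2)).
have hB : Bx (ventry x) = h1 - h2 + S1.
  by rewrite /Bx (sum_diff (fun v => ventry x (inl (inl v)))) // hd mul1r.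
rewrite hB.
have d11 : dH u1 u1 = 0%N by apply/eqP; rewrite (d_eq0 cH).
have rowH : forall u, rho1 * ventry x (inl (inl u)) =
   \sum_v (dH u v)%:R * ventry x (inl (inl v)) +
   \sum_z (dH u u1 + hdist E1 r1 (val z))%:R * ventry x (inl (inr z)) +
   \sum_y (dH u u1 + hdist E2 r2 (val y))%:R * ventry x (inr y).
  move=> u; rewrite -(rowK1 _ heig) sumV.
  congr (_ + _ + _); apply: eq_bigr => q _.
  - by rewrite (dK_HH r1 r2 cH c1 c2).
  - by rewrite (dK_H1' r2 cH c1 c2) (d_sym cH u u1).
  - by rewrite (dK_H2' r1 cH c1 c2) (d_sym cH u u1).
have e1 := rowH u1; have e2 := rowH u2.
rewrite d11 hd' in e1 e2.
have HS : \sum_v (dH u1 v)%:R * ventry x (inl (inl v)) -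
          \sum_v (dH u2 v)%:R * ventry x (inl (inl v)) = h2 - h1.
  have := sum_diff (fun v => ventry x (inl (inl v))) hu heq hd.
  rewrite -/h1 -/h2 => sd.
  have -> : h2 - h1 = - (h1 - h2) by ring.
  rewrite -sd -sumrB -sumrN; apply: eq_bigr => v _.
  rewrite (d_sym cH u1 v) (d_sym cH u2 v); ring.
have ez : \sum_z (1 + hdist E1 r1 (val z))%:R * ventry x (inl (inr z)) =
    S1 + \sum_z (0 + hdist E1 r1 (val z))%:R * ventry x (inl (inr z)).
  by rewrite /S1 -big_split; apply: eq_bigr => z _ /=; rewrite !natrD; ring.
have ey : \sum_y (1 + hdist E2 r2 (val y))%:R * ventry x (inr y) =
    S2 + \sum_y (0 + hdist E2 r2 (val y))%:R * ventry x (inr y).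
  by rewrite /S2 -big_split; apply: eq_bigr => z _ /=; rewrite !natrD; ring.
rewrite ez ey in e2.
have rz : forall z, 2 * S2 <= rho1 * ventry x (inl (inr z)).
  move=> z; rewrite -(rowK1 _ heig) sumV.
  have hz1 : (1 <= hdist E1 r1 (val z))%N.
    by rewrite lt0n (d_eq0 c1) eq_sym; exact: (valP z).
  rewrite -addrA ler_wpDl //.
    by apply: sumr_ge0 => q _; rewrite mulr_ge0 ?ler0n ?ltW ?hpos.
  rewrite ler_wpDl //.
    by apply: sumr_ge0 => q _; rewrite mulr_ge0 ?ler0n ?ltW ?hpos.
  rewrite /S2 mulr_sumr; apply: ler_sum => y _.
  rewrite (dK_12' cH c1 c2) ler_pM2r //.
  have hy1 : (1 <= hdist E2 r2 (val y))%N.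
    by rewrite lt0n (d_eq0 c2) eq_sym; exact: (valP y).
  have : (2 <= hdist E1 r1 (val z) + dH u1 u1 + hdist E2 r2 (val y))%N by lia.
  by rewrite -(ler_nat R).
have S2p : 0 < S2 by apply: (pos_sum y0) => y; exact: hpos.
have g0 := hpos (inl (inr z0)).
have rz0 := rz z0.
have rpos : 0 < rho1.
  rewrite ltNge; apply/negP => hr.
  have : rho1 * ventry x (inl (inr z0)) <= 0 by rewrite mulr_le0_ge0 // ltW.
  lra.
have hS1 : 2 * S2 <= rho1 * S1.
  have -> : rho1 * S1 = \sum_z rho1 * ventry x (inl (inr z)) by rewrite /S1 mulr_sumr.
  rewrite (bigD1 z0) //=.
  apply: (le_trans rz0); rewrite ler_wpDr //.
  by apply: sumr_ge0 => z _; rewrite mulr_ge0 ?ltW ?hpos.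
rewrite -/h1 in e1; rewrite -/h2 in e2.
rewrite ltNge; apply/negP => hb.
have : rho1 * (h1 - h2 + S1) <= 0 by rewrite mulr_ge0_le0 // ltW.
have -> : rho1 * (h1 - h2 + S1) = rho1 * h1 - rho1 * h2 + rho1 * S1 by ring.
lra.
Qed.
End Main.

Theorem lemma4 (R : realType) (T T1 T2 : finType)
  (EH : {set {set T}}) (E1 : {set {set T1}}) (E2 : {set {set T2}})
  (r1 : T1) (r2 : T2) (u1 u2 : T) :
  hypergraph EH -> hconnected EH ->
  hypergraph E1 -> hconnected E1 -> E1 != set0 ->
  hypergraph E2 -> hconnected E2 -> E2 != set0 ->
  u1 != u2 ->
  forall rho1 rho2 : R,
  largest_eigenvalue (dist_mx R (@coal_edges T T1 T2 r1 r2 EH E1 E2 u1 u1)) rho1 ->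
  largest_eigenvalue (dist_mx R (@coal_edges T T1 T2 r1 r2 EH E1 E2 u1 u2)) rho2 ->
  ((hdeg EH u1 = 1%N /\ hdeg EH u2 = 1%N /\ hdist EH u1 u2 = 1%N) \/
   (exists x : 'cV[R]_#|@cvert T T1 T2 r1 r2|,
      perron_vector (dist_mx R (@coal_edges T T1 T2 r1 r2 EH E1 E2 u1 u1)) x /\
      sigma x (@V'G1 T T1 T2 r1 r2) + ventry x (@embH T T1 T2 r1 r2 u1)
        >= sigma x (@VH T T1 T2 r1 r2))) ->
  rho1 < rho2.
Proof.
move=> hypH hcH hyp1 hc1 hE1 hyp2 hc2 hE2 hu rho1 rho2 hL1 hL2 hcase.
have cH := hconn_conn hcH; have c1 := hconn_conn hc1; have c2 := hconn_conn hc2.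
have cK1 := @cK T T1 T2 r1 r2 EH E1 E2 u1 u1 cH c1 c2.
have [z0 _] := nonroot r1 hyp1 hE1.
have [y0 _] := nonroot r2 hyp2 hE2.
case: hcase => [[hg1 [hg2 hd]] | [x [[rho' [hL' xpos xn xeig]] hsig]]].
  have hnn : forall i j, 0 <= dist_mx R (@coal_edges T T1 T2 r1 r2 EH E1 E2 u1 u1) i j.
    by move=> i j; rewrite mxE ler0n.
  have hoff : forall i j, i != j -> 0 < dist_mx R (@coal_edges T T1 T2 r1 r2 EH E1 E2 u1 u1) i j.
    by move=> i j hij; rewrite mxE ltr0n lt0n (d_eq0 cK1) (inj_eq enum_val_inj).
  have htwo : exists i j : 'I_#|@cvert T T1 T2 r1 r2|, i != j.
    exists (enum_rank (inl (inl u1))), (enum_rank (inl (inl u2))).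
    by rewrite (inj_eq enum_rank_inj).
  have [x [xpos xn xeig]] := perron_exists (dist_sym R cK1) hnn hoff htwo hL1.1 hL1.2.
  apply: (core cH c1 c2 hL2 xn xeig).
    by apply: (pos_sum y0) => y; exact: xpos.
  exact: (case1_B cH c1 c2 hg1 hg2 hd xpos xeig (ex_intro _ z0 I) (ex_intro _ y0 I)).
have e : rho' = rho1.
  by apply/eqP; rewrite eq_le (hL1.2 _ hL'.1) (hL'.2 _ hL1.1).
subst rho'.
apply: (core cH c1 c2 hL2 xn xeig).
  by apply: (pos_sum y0) => y; exact: xpos.
exact: (case2_B cH hu xpos hsig).
Qed.
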